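(* Let $a$ be a real number and $r\ge1$. On the space of polynomials in $y=(y_1,\dots,y_r)$, define the operators $$D_j=\partial_{y_j}+\frac a2\sum_{i\ne j}\frac{1}{y_j-y_i}(1-s_{ij}),\qquad U_j=D_jy_j-\frac a2\sum_{i<j}s_{ij},$$ where $s_{ij}$ acts by interchanging the variables $y_i$ and $y_j$ and $D_jy_j$ denotes the composition of multiplication by $y_j$ followed by $D_j$. Then $$(D_1D_2\cdots D_r)(y_1y_2\cdots y_r)=U_1U_2\cdots U_r,$$ where $y_1\cdots y_r$ denotes the multiplication operator. *)

(* Defs.v *)
From HB Require Import structures.
From Stdlib Require Import ClassicalEpsilon.
From mathcomp Require Import all_boot all_order all_algebra all_fingroup.
From mathcomp Require Import reals.
From mathcomp.multinomials Require Import mpoly.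
Set Implicit Arguments. Unset Strict Implicit. Unset Printing Implicit Defensive.
Import Order.TTheory GRing.Theory Num.Theory.
Local Open Scope ring_scope.

Section Dunkl.
Variables (R : realType) (r : nat) (a : R).

Definition swapv (i j : 'I_r) (p : {mpoly R[r]}) : {mpoly R[r]} :=
  msym (tperm i j) p.

(* The operator (y_j - y_i)^{-1} (1 - s_ij) on polynomials: the (unique, since
   the division is exact in the polynomial ring) q with (y_j - y_i) q = p - s_ij p. *)
Definition divdiff (i j : 'I_r) (p : {mpoly R[r]}) : {mpoly R[r]} :=
  epsilon (inhabits 0) (fun q : {mpoly R[r]} => ('X_j - 'X_i) * q = p - swapv i j p).

Definition Dunkl (j : 'I_r) (p : {mpoly R[r]}) : {mpoly R[r]} :=
  mderiv j p + (a / 2) *: \sum_(i < r | i != j) divdiff i j p.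

Definition Uop (j : 'I_r) (p : {mpoly R[r]}) : {mpoly R[r]} :=
  Dunkl j ('X_j * p) - (a / 2) *: \sum_(i < r | (i < j)%N) swapv i j p.

Definition compall (F : 'I_r -> {mpoly R[r]} -> {mpoly R[r]}) :
  {mpoly R[r]} -> {mpoly R[r]} :=
  foldr (fun j g => F j \o g) id (enum 'I_r).

Definition mulY (p : {mpoly R[r]}) : {mpoly R[r]} := (\prod_(i < r) 'X_i) * p.

End Dunkl.

(* Main.v *)
Require Import Defs.
From Stdlib Require Import ClassicalEpsilon.
From mathcomp Require Import all_boot all_order all_algebra all_fingroup.
From mathcomp Require Import reals.
From mathcomp.multinomials Require Import mpoly.
From mathcomp Require Import ring.
Set Implicit Arguments. Unset Strict Implicit. Unset Printing Implicit Defensive.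
Import Order.TTheory GRing.Theory Num.Theory.
Local Open Scope ring_scope.

Section S.
Variables (R : realType) (n : nat) (a : R).
Implicit Types (p q : {mpoly R[n]}).
Local Notation sw := (@swapv R n).

Lemma swapX (i j k : 'I_n) : sw i j 'X_k = 'X_(tperm i j k).
Proof.
rewrite /swapv msymX; congr 'X_[_]; apply/mnmP=> l.
rewrite !mnmE tpermV -(inj_eq (@perm_inj _ (tperm i j))) tpermK.
by rewrite eq_sym.
Qed.

Lemma swapM (i j : 'I_n) p q : sw i j (p * q) = sw i j p * sw i j q.
Proof. exact: msymM. Qed.
Lemma swapB (i j : 'I_n) p q : sw i j (p - q) = sw i j p - sw i j q.
Proof. exact: msymB. Qed.

Lemma swap_prod (i j : 'I_n) (P : pred 'I_n) :
  (forall k, P k -> (k != i) && (k != j)) ->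
  sw i j (\prod_(k | P k) 'X_k) = \prod_(k | P k) 'X_k.
Proof.
move=> HP; rewrite /swapv rmorph_prod; apply: eq_bigr => k /HP /andP[ki kj].
transitivity (sw i j 'X_k); first by [].
by rewrite swapX tpermD // eq_sym.
Qed.

Lemma XBX_neq0 (i j : 'I_n) : i != j -> ('X_j - 'X_i : {mpoly R[n]}) != 0.
Proof.
move=> ij; apply/eqP => /(congr1 (fun q : {mpoly R[n]} => q@_U_(j))).
rewrite mcoeffB !mcoeffXU eqxx (negbTE ij) subr0 mcoeff0 => /eqP.
by rewrite oner_eq0.
Qed.

Definition Ex (i j : 'I_n) p := exists q, ('X_j - 'X_i) * q = p - sw i j p.

Lemma Ex_all (i j : 'I_n) p : Ex i j p.
Proof.
have E0 : Ex i j 0 by exists 0; rewrite /swapv msym0 !subr0 mulr0.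
have ED : forall p q, Ex i j p -> Ex i j q -> Ex i j (p + q).
  move=> p1 q1 [x Hx] [y Hy]; exists (x + y).
  by rewrite mulrDr Hx Hy /swapv msymD; ring.
have EM : forall p q, Ex i j p -> Ex i j q -> Ex i j (p * q).
  move=> p1 q1 [x Hx] [y Hy]; exists (x * q1 + sw i j p1 * y).
  rewrite swapM; transitivity ((('X_j - 'X_i) * x) * q1 + sw i j p1 * (('X_j - 'X_i) * y)); first ring.
  by rewrite Hx Hy; ring.
have EZ : forall c p, Ex i j p -> Ex i j (c *: p).
  move=> c p1 [x Hx]; exists (c *: x).
  by rewrite /swapv msymZ -scalerBr -Hx scalerAr.
have EX : forall k, Ex i j 'X_k.
  move=> k; rewrite /Ex swapX.
  case: (tpermP i j k) => [->|->|ki kj].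
  - by exists (-1); ring.
  - by exists 1; ring.
  - by exists 0; rewrite subrr mulr0.
have E1 : Ex i j 1 by exists 0; rewrite /swapv msym1 subrr mulr0.
elim/mpolyind: p => [//|c m p _ _ Hp]; apply: ED => //; apply: EZ.
rewrite mpolyXE_id; apply: (big_ind (Ex i j)) => // k _.
elim: (m k) => [|e IH]; first by rewrite expr0.
by rewrite exprS; apply: EM.
Qed.

Lemma divdiff_spec (i j : 'I_n) p :
  ('X_j - 'X_i) * divdiff i j p = p - sw i j p.
Proof.
rewrite /divdiff; case: (Ex_all i j p) => q Hq.
exact: (epsilon_spec (inhabits 0) (fun q : {mpoly R[n]} => ('X_j - 'X_i) * q = p - sw i j p) (ex_intro _ q Hq)).
Qed.

Lemma divdiff_uniq (i j : 'I_n) p q : i != j ->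
  ('X_j - 'X_i) * q = p - sw i j p -> divdiff i j p = q.
Proof.
move=> ij Hq; apply: (mulfI (XBX_neq0 ij)).
by rewrite divdiff_spec Hq.
Qed.


Lemma mderiv_prodX (j : 'I_n) (P : pred 'I_n) :
  (forall k, P k -> k != j) -> mderiv j (\prod_(k | P k) ('X_k : {mpoly R[n]})) = 0.
Proof.
move=> HP; apply: (big_ind (fun q : {mpoly R[n]} => mderiv j q = 0)).
- by rewrite -mpolyC1 mderivC.
- by move=> x y hx hy; rewrite mderivM hx hy mul0r mulr0 addr0.
- by move=> k /HP kj; rewrite mderivX mnm1E (negbTE kj) scale0r.
Qed.

Lemma key (j : 'I_n) p :
  Dunkl a j ((\prod_(i < n | (i < j)%N) 'X_i) * ('X_j * p)) =
  (\prod_(i < n | (i < j)%N) 'X_i) * Uop a j p.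
Proof.
set m := \prod_(i < n | (i < j)%N) 'X_i.
have Hdd : forall i, i != j -> divdiff i j (m * ('X_j * p)) =
    m * (divdiff i j ('X_j * p) - (if (i < j)%N then sw i j p else 0)).
  move=> i ij; apply: divdiff_uniq => //.
  have H := divdiff_spec i j ('X_j * p).
  rewrite swapM swapX tpermR in H.
  case: ifP => ilt.
  - have -> : m = 'X_i * \prod_(k < n | (k < j)%N && (k != i)) 'X_k by rewrite /m (bigD1 i).
    set m' := \prod_(k | _) _.
    rewrite !swapM !swapX tpermL tpermR swap_prod; last first.
      move=> k /andP[kj ki]; rewrite ki /=; apply/eqP => ekj.
      by rewrite ekj ltnn in kj.
    rewrite -/m'.     transitivity ('X_i * m' * (('X_j - 'X_i) * divdiff i j ('X_j * p)) - 'X_i * m' * ('X_j - 'X_i) * sw i j p); first ring.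
    by rewrite H; ring.
  - rewrite !swapM swap_prod; last first.
      move=> k kj; rewrite andbC; apply/andP; split.
        by apply/eqP => ekj; rewrite ekj ltnn in kj.
      by apply/eqP => eki; rewrite -eki kj in ilt.
    rewrite swapX tpermR.
    transitivity (m * (('X_j - 'X_i) * divdiff i j ('X_j * p))); first ring.
    rewrite -/m.     by rewrite H; ring.
rewrite /Dunkl /Uop mderivM mderiv_prodX; last first.
  by move=> k kj; apply/eqP => ekj; rewrite ekj ltnn in kj.
rewrite mul0r add0r.
under eq_bigr => i ij do rewrite Hdd //.
rewrite -mulr_sumr sumrB.
have -> : \sum_(i < n | i != j) (if (i < j)%N then sw i j p else 0) =
          \sum_(i < n | (i < j)%N) sw i j p.
  rewrite big_mkcond [RHS]big_mkcond; apply: eq_bigr => i _.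
  case: (eqVneq i j) => [->|ij]; first by rewrite ltnn.
  by [].
rewrite /Dunkl -!mul_mpolyC; ring.
Qed.

End S.

Lemma comp_shift (R : realType) (n : nat) (I : Type) (F : I -> {mpoly R[n]} -> {mpoly R[n]}) s h x :
  foldr (fun j (g : {mpoly R[n]} -> {mpoly R[n]}) => F j \o g) h s x = foldr (fun j (g : {mpoly R[n]} -> {mpoly R[n]}) => F j \o g) id s (h x).
Proof. by elim: s => //= j s IH; rewrite IH. Qed.

Unset Implicit Arguments.
Theorem lemma6p1 (R : realType) (a : R) (r : nat) (hr : (1 <= r)%N)
  (p : {mpoly R[r]}) :
  compall (Dunkl a) (mulY p) = compall (Uop a) p.
Proof.
case: r hr p => [//|r'] _ p.
set n := r'.+1.
have E : enum 'I_n = map inord (iota 0 n).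
  rewrite -val_enum_ord -map_comp -[LHS]map_id; apply: eq_map => i /=.
  by rewrite inord_val.
rewrite /compall /mulY E !foldr_map.
set G := fun (F : 'I_n -> {mpoly R[n]} -> {mpoly R[n]}) k =>
  foldr (fun k g => F (inord k) \o g) id (iota 0 k).
suff H : forall k, (k <= n)%N -> forall q,
    G (Dunkl a) k ((\prod_(i < n | (i < k)%N) 'X_i) * q) = G (Uop a) k q.
  have := H n (leqnn n) p; rewrite /G => <-.
  congr (_ _); congr (_ * _); apply: eq_bigl => i; by rewrite /= ltn_ord.
elim=> [|k IH] kn q.
  by rewrite /G /= big_pred0 // mul1r.
have kn' : (k < n)%N by [].
rewrite /G -addn1 iotaD cats1 !foldr_rcons add0n.
rewrite comp_shift [in RHS]comp_shift.
set j : 'I_n := inord k.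
have vj : val j = k by rewrite /j; apply: inordK.
have := key a j q; rewrite vj => Hk.
rewrite (bigD1 j) /=; last by rewrite addn1 vj.
rewrite (eq_bigl (fun i : 'I_n => (i < k)%N)); last first.
  move=> i /=; rewrite addn1 ltnS -(inj_eq val_inj) /= vj.
  by rewrite ltn_neqAle andbC.
rewrite -mulrA mulrCA Hk.
exact: (IH (ltnW kn')).
Qed.
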